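(* For every $\epsilon>0$ and $\delta\in(0,1)$, the minimax complexity of the stochastic global oracle for the finite-sum problem $\min_{\mathbf{w}\in\mathbb{R}^d}F(\mathbf{w})=\frac1n\sum_{i=1}^n f_i(\mathbf{w})$ over the class $\Sigma$ of all such finite sums (with arbitrary, not necessarily convex or smooth, individual functions, $F$ bounded below) satisfies $$\mathfrak{M}_{\Sigma,\mathsf{S}_f}(\epsilon,\delta)\le 2n^2\log(2n/\delta).$$
   Context: The stochastic global oracle $\mathsf{S}_f$, on each call, returns the entire function $f_i$ (a complete specification of it), for an index $i\sim\mathrm{Unif}([n])$ drawn independently at each call, without revealing $i$; computational cost other than the number of oracle calls is disregarded. For a function class $\mathcal F$ and oracle $\mathsf O$, let $\mathcal A(\mathsf O,k)$ be the class of algorithms issuing at most $k$ $\mathsf O$-queries, and $\mathbf{w}_{A(f)}$ the output of $A$ on $f$. Then $\mathfrak{M}_{\mathcal F,\mathsf O}(\epsilon,\delta)=\inf\{k\in\mathbb{N}:\exists A\in\mathcal A(\mathsf O,k)\text{ with }\sup_{f\in\mathcal F}\mathbb{P}(f(\mathbf{w}_{A(f)})-f^*>\epsilon)<\delta\}$, where $f^*$ is the infimum of $f$. *)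

(* Defs.v *)
From Stdlib Require Import Reals Lra Lia Arith List ClassicalEpsilon.
From Stdlib Require Fin.
Import ListNotations.
Open Scope R_scope.

Definition Vec (d : nat) : Type := Fin.t d -> R.

Definition Fn (d : nat) : Type := Vec d -> R.

(* F(w) = (1/n) * sum_{i=0}^{n-1} f_i(w)   (indices 0..n-1 encode [n]) *)
Definition finite_sum {d : nat} (n : nat) (f : nat -> Fn d) (w : Vec d) : R :=
  / INR n * fold_right Rplus 0 (map (fun i => f i w) (seq 0 n)).

Definition bounded_below {d : nat} (F : Fn d) : Prop :=
  exists b : R, forall w, b <= F w.

Definition is_inf {d : nat} (F : Fn d) (m : R) : Prop :=
  (forall w, m <= F w) /\ (forall b, (forall w, b <= F w) -> b <= m).

Fixpoint idx_seqs (n k : nat) : list (list nat) :=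
  match k with
  | O => [ [] ]
  | S k' => flat_map (fun i => map (cons i) (idx_seqs n k')) (seq 0 n)
  end.

Definition decide (P : Prop) : bool :=
  if excluded_middle_informative P then true else false.

(* Probability of event E when the k indices are i.i.d. uniform on [n]:
   (number of index sequences in E) / n^k. *)
Definition prob_idx (n k : nat) (E : list nat -> Prop) : R :=
  INR (length (filter (fun s => decide (E s)) (idx_seqs n k))) / INR (n ^ k).

(* An algorithm issuing k queries to the stochastic global oracle: it only sees
   the list of returned functions (f_{i_1}, ..., f_{i_k}), not the indices,
   and outputs a point.  Adaptivity is irrelevant since the oracle takes no
   input; issuing fewer than k queries is subsumed by ignoring samples. *)
Definition algorithm (d : nat) : Type := list (Fn d) -> Vec d.

Definition fails {d : nat} (n : nat) (f : nat -> Fn d) (eps : R)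
    (A : algorithm d) (s : list nat) : Prop :=
  forall m, is_inf (finite_sum n f) m ->
    finite_sum n f (A (map f s)) - m > eps.

Definition achieves (d n k : nat) (eps delta : R) : Prop :=
  exists A : algorithm d, exists eta : R, eta < delta /\
    forall f : nat -> Fn d, bounded_below (finite_sum n f) ->
      prob_idx n k (fails n f eps A) <= eta.

(* Main.v *)
From Coquelicot Require Import Coquelicot.
From Stdlib Require Import Reals Lra Lia Arith List ClassicalEpsilon FunctionalExtensionality ZArith.
Require Import Defs.
Import ListNotations.
Open Scope R_scope.

Definition sumR {A} (l : list A) (g : A -> R) : R :=
  fold_right (fun x acc => g x + acc) 0 l.

Lemma sumR_cons {A} (x : A) l g : sumR (x :: l) g = g x + sumR l g.
Proof. reflexivity. Qed.

Lemma sumR_app {A} (l1 l2 : list A) g : sumR (l1 ++ l2) g = sumR l1 g + sumR l2 g.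
Proof. induction l1; simpl; [lra|]. rewrite IHl1; lra. Qed.

Lemma sumR_map {A B} (h : A -> B) l g : sumR (map h l) g = sumR l (fun x => g (h x)).
Proof. induction l; simpl; auto. rewrite IHl; auto. Qed.

Lemma sumR_flat_map {A B} (h : A -> list B) l g :
  sumR (flat_map h l) g = sumR l (fun x => sumR (h x) g).
Proof. induction l; simpl; auto. rewrite sumR_app, IHl; auto. Qed.

Lemma sumR_ext {A} (l : list A) g h : (forall x, In x l -> g x = h x) -> sumR l g = sumR l h.
Proof. induction l; simpl; intros H; auto. rewrite H, IHl; auto. Qed.

Lemma sumR_le {A} (l : list A) g h : (forall x, In x l -> g x <= h x) -> sumR l g <= sumR l h.
Proof. induction l; simpl; intros H; [lra|].
  pose proof (H a (or_introl eq_refl)). pose proof (IHl (fun x Hx => H x (or_intror Hx))). lra. Qed.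

Lemma sumR_plus {A} (l : list A) g h : sumR l (fun x => g x + h x) = sumR l g + sumR l h.
Proof. induction l; simpl; [lra|]. rewrite IHl; lra. Qed.

Lemma sumR_scal {A} (l : list A) c g : c * sumR l g = sumR l (fun x => c * g x).
Proof. induction l; simpl; [lra|]. rewrite <- IHl; lra. Qed.

Lemma sumR_const {A} (l : list A) c : sumR l (fun _ => c) = INR (length l) * c.
Proof. induction l; simpl length; [simpl; lra|]. rewrite S_INR. simpl. rewrite IHl; lra. Qed.

Lemma sumR_swap {A B} (l1 : list A) (l2 : list B) g :
  sumR l1 (fun x => sumR l2 (fun y => g x y)) = sumR l2 (fun y => sumR l1 (fun x => g x y)).
Proof.
  induction l1; simpl.
  - induction l2; simpl; auto. rewrite <- IHl2; lra.
  - rewrite IHl1. rewrite <- sumR_plus. auto.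
Qed.

Lemma sumR_nonneg {A} (l : list A) g : (forall x, In x l -> 0 <= g x) -> 0 <= sumR l g.
Proof. intros H. apply Rle_trans with (sumR l (fun _ => 0)).
  rewrite sumR_const; lra. apply sumR_le; auto. Qed.

Lemma fold_finite_sum (l : list nat) (g : nat -> R) :
  fold_right Rplus 0 (map g l) = sumR l g.
Proof. induction l; simpl; auto. rewrite IHl; auto. Qed.

Definition ind (P : Prop) : R := if decide P then 1 else 0.

Lemma decide_true (P : Prop) : P -> decide P = true.
Proof. unfold decide; destruct (excluded_middle_informative P); tauto. Qed.
Lemma decide_false (P : Prop) : ~ P -> decide P = false.
Proof. unfold decide; destruct (excluded_middle_informative P); tauto. Qed.
Lemma decide_iff (P : Prop) : decide P = true <-> P.
Proof. unfold decide; destruct (excluded_middle_informative P); split; intros; auto; discriminate || tauto. Qed.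

Lemma ind_true P : P -> ind P = 1. Proof. intros; unfold ind; rewrite decide_true; auto. Qed.
Lemma ind_false P : ~ P -> ind P = 0. Proof. intros; unfold ind; rewrite decide_false; auto. Qed.
Lemma ind_01 P : 0 <= ind P <= 1.
Proof. unfold ind; destruct (decide P); lra. Qed.

Lemma length_filter_sumR {A} (l : list A) (P : A -> Prop) :
  INR (length (filter (fun x => decide (P x)) l)) = sumR l (fun x => ind (P x)).
Proof. induction l; simpl; auto. unfold ind at 1. destruct (decide (P a)); simpl length;
  try rewrite S_INR; rewrite IHl; lra. Qed.

Lemma length_filter_b {A} (l : list A) (b : A -> bool) :
  INR (length (filter b l)) = sumR l (fun x => if b x then 1 else 0).
Proof. induction l; simpl; auto. destruct (b a); simpl length;
  try rewrite S_INR; rewrite IHl; lra. Qed.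

Lemma idx_seqs_in n k s : In s (idx_seqs n k) -> length s = k /\ forall i, In i s -> (i < n)%nat.
Proof.
  revert s; induction k; simpl; intros s Hs.
  - destruct Hs as [<-|[]]. simpl; split; auto; intros i [].
  - apply in_flat_map in Hs. destruct Hs as [i [Hi Hs]]. apply in_map_iff in Hs.
    destruct Hs as [s' [<- Hs']]. apply in_seq in Hi. destruct (IHk s' Hs') as [H1 H2].
    simpl; split; auto. intros j [<-|Hj]; [lia|auto].
Qed.

Lemma sum_idx_pow n k (b : nat -> bool) (z : R) :
  sumR (idx_seqs n k) (fun s => z ^ length (filter b s)) =
  (sumR (seq 0 n) (fun j => if b j then z else 1)) ^ k.
Proof.
  induction k; simpl.
  - lra.
  - rewrite sumR_flat_map. rewrite <- IHk.
    rewrite Rmult_comm, sumR_scal.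
    apply sumR_ext; intros i _. rewrite sumR_map. rewrite Rmult_comm, sumR_scal.
    apply sumR_ext; intros s _. simpl. destruct (b i); simpl; lra.
Qed.
Lemma exp_mono_le (x y : R) : x <= y -> exp x <= exp y.
Proof. intros [H|H]. left; apply exp_increasing; exact H. subst; lra. Qed.

Lemma hoeff_pos (p x : R) : 0 <= p <= 1 -> 0 < 1 - p + p * exp x.
Proof.
  intros Hp. pose proof (exp_pos x).
  destruct (Req_dec p 0) as [->|Hp0]. lra.
  assert (0 < p * exp x) by (apply Rmult_lt_0_compat; lra). lra.
Qed.

Lemma hoeffding_lemma (p l : R) : 0 <= p <= 1 -> 0 <= l ->
  1 - p + p * exp l <= exp (l * p + l ^ 2 / 8).
Proof.
  intros Hp Hl.
  set (g := fun x => 1 - p + p * exp x).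
  set (psi1 := fun x => p + x / 4 - p * exp x / g x).
  set (psi1' := fun x => / 4 - (1 - p) * (p * exp x) / (g x) ^ 2).
  assert (Hg : forall x, 0 < g x) by (intro x; apply hoeff_pos; exact Hp).
  assert (D1 : forall x, is_derive psi1 x (psi1' x)).
  { intro x. unfold psi1, psi1', g. pose proof (Hg x). unfold g in H.
    auto_derive. lra. field. lra. }
  assert (P1 : forall x, 0 <= psi1' x).
  { intro x. unfold psi1'. pose proof (Hg x). pose proof (exp_pos x).
    assert ((1 - p) * (p * exp x) / g x ^ 2 <= /4).
    { apply (Rmult_le_reg_r (g x ^ 2)). apply pow_lt; lra.
      unfold Rdiv. rewrite Rmult_assoc, Rinv_l. 2: apply pow_nonzero; lra.
      unfold g. simpl. rewrite Rmult_1_r. pose proof (pow2_ge_0 (1 - p - p * exp x)). simpl in H1. nra. }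
    lra. }
  assert (Q1 : forall x, 0 <= x -> 0 <= psi1 x).
  { intros x Hx. destruct (MVT_gen psi1 0 x psi1') as [c [_ Hc]].
    - intros; apply D1.
    - intros y _. apply derivable_continuous_pt. exists (psi1' y). apply is_derive_Reals, D1.
    - assert (psi1 0 = 0). { unfold psi1, g. rewrite exp_0. replace (1 - p + p * 1) with 1 by ring. field. }
      pose proof (P1 c). nra. }
  set (psi := fun x => x * p + x ^ 2 / 8 - ln (g x)).
  assert (D : forall x, is_derive psi x (psi1 x)).
  { intro x. unfold psi, psi1. pose proof (Hg x). unfold g in *.
    auto_derive. lra. field. lra. }
  assert (0 <= psi l).
  { destruct (MVT_gen psi 0 l psi1) as [c [Hc1 Hc]].
    - intros; apply D.
    - intros y _. apply derivable_continuous_pt. exists (psi1 y). apply is_derive_Reals, D.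
    - assert (psi 0 = 0). { unfold psi, g. rewrite exp_0.
        replace (1 - p + p * 1) with 1 by ring. rewrite ln_1. field. }
      rewrite Rmin_left in Hc1 by lra. rewrite Rmax_right in Hc1 by lra.
      pose proof (Q1 c ltac:(lra)). nra. }
  unfold psi in H. pose proof (Hg l). pose proof (exp_ln (g l) H0).
  unfold g in *. rewrite <- H1. apply exp_mono_le. lra.
Qed.

Lemma exp_INR_mult m x : exp (INR m * x) = exp x ^ m.
Proof. induction m; simpl pow. rewrite Rmult_0_l, exp_0; auto.
  rewrite S_INR, Rmult_plus_distr_r, Rmult_1_l, exp_plus, IHm; ring. Qed.

Lemma sum_if_count (l : list nat) (b : nat -> bool) z :
  sumR l (fun j => if b j then z else 1) =
  INR (length l) - INR (length (filter b l)) + INR (length (filter b l)) * z.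
Proof. induction l; [simpl; lra|]. rewrite sumR_cons, IHl. simpl filter.
  destruct (b a); simpl length; rewrite ?S_INR; ring. Qed.

Lemma filter_length_le {A} (l : list A) b : (length (filter b l) <= length l)%nat.
Proof. induction l; simpl; auto. destruct (b a); simpl; lia. Qed.

Lemma tail_up n k (b : nat -> bool) t : (0 < n)%nat -> 0 < t ->
  sumR (idx_seqs n k) (fun s =>
     ind (INR k * (INR (length (filter b (seq 0 n))) / INR n + t) <= INR (length (filter b s))))
  <= INR n ^ k * exp (- (2 * INR k * t ^ 2)).
Proof.
  intros Hn Ht.
  set (c := INR (length (filter b (seq 0 n)))).
  assert (Hn' : 0 < INR n) by (apply lt_0_INR; lia).
  assert (Hc : 0 <= c <= INR n).
  { unfold c; split. apply pos_INR. rewrite <- (length_seq n 0) at 2. apply le_INR, filter_length_le. }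
  set (p := c / INR n).
  assert (Hp : 0 <= p <= 1).
  { unfold p; split. apply Rmult_le_pos; [lra| left; apply Rinv_0_lt_compat; lra].
    apply (Rmult_le_reg_r (INR n)); auto. unfold Rdiv; rewrite Rmult_assoc, Rinv_l; lra. }
  set (l := 4 * t). set (a := INR k * (p + t)).
  apply Rle_trans with (sumR (idx_seqs n k) (fun s => exp (- (l * a)) * exp l ^ length (filter b s))).
  { apply sumR_le; intros s _. rewrite <- exp_INR_mult, <- exp_plus.
    unfold ind. destruct (decide_iff (a <= INR (length (filter b s)))) as [H1 H2].
    fold p. fold a. destruct (decide (a <= INR (length (filter b s)))).
    - rewrite <- exp_0. apply exp_mono_le. specialize (H1 eq_refl). unfold l. nra.
    - left; apply exp_pos. }
  rewrite <- sumR_scal, sum_idx_pow, sum_if_count, length_seq. fold c.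
  replace (INR n - c + c * exp l) with (INR n * (1 - p + p * exp l))
    by (unfold p; field; lra).
  apply Rle_trans with (exp (- (l * a)) * (INR n * exp (l * p + l ^ 2 / 8)) ^ k).
  { apply Rmult_le_compat_l. left; apply exp_pos. apply pow_incr. split.
    - apply Rmult_le_pos. lra. left; apply hoeff_pos; auto.
    - apply Rmult_le_compat_l. lra. apply hoeffding_lemma; auto. unfold l; lra. }
  rewrite Rpow_mult_distr, <- exp_INR_mult.
  replace (exp (- (l * a)) * (INR n ^ k * exp (INR k * (l * p + l ^ 2 / 8))))
    with (INR n ^ k * (exp (- (l * a)) * exp (INR k * (l * p + l ^ 2 / 8)))) by ring.
  rewrite <- exp_plus. apply Rmult_le_compat_l. apply pow_le; lra.
  right. f_equal. unfold l, a. field.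
Qed.

Lemma sumR_ge_term {A} (l : list A) g x : In x l -> (forall y, In y l -> 0 <= g y) -> g x <= sumR l g.
Proof.
  induction l; simpl; intros Hx Hg; [destruct Hx|].
  destruct Hx as [<-|Hx].
  - pose proof (sumR_nonneg l g (fun y Hy => Hg y (or_intror Hy))). lra.
  - pose proof (Hg a (or_introl eq_refl)). pose proof (IHl Hx (fun y Hy => Hg y (or_intror Hy))). lra.
Qed.

Lemma ind_sym {A} (a b : A) : ind (a = b) = ind (b = a).
Proof. destruct (excluded_middle_informative (a = b)) as [H|H].
  rewrite !ind_true; auto. rewrite !ind_false; auto. Qed.

Definition Xc {d} (f : nat -> Fn d) (s : list nat) (i : nat) : nat :=
  length (filter (fun j => decide (f j = f i)) s).
Definition cc {d} (f : nat -> Fn d) (n i : nat) : nat := Xc f (seq 0 n) i.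

Lemma Xc_inv {d} (f : nat -> Fn d) s i j : f i = f j -> Xc f s i = Xc f s j.
Proof. intros H; unfold Xc; rewrite H; auto. Qed.

Lemma Xc_sum {d} (f : nat -> Fn d) s i : INR (Xc f s i) = sumR s (fun t => ind (f t = f i)).
Proof. unfold Xc. apply (length_filter_sumR s (fun t => f t = f i)). Qed.

Lemma cc_pos {d} (f : nat -> Fn d) n i : (i < n)%nat -> 1 <= INR (cc f n i).
Proof. intros H. unfold cc. rewrite Xc_sum.
  rewrite <- (ind_true (f i = f i) eq_refl).
  apply (sumR_ge_term _ (fun t => ind (f t = f i))). apply in_seq; lia.
  intros; apply ind_01. Qed.

Lemma Xc_le {d} (f : nat -> Fn d) s i : INR (Xc f s i) <= INR (length s).
Proof. apply le_INR. apply filter_length_le. Qed.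

Lemma key {d} (f : nat -> Fn d) n s (phi : nat -> R) :
  (forall i j, f i = f j -> phi i = phi j) ->
  sumR s (fun t => INR (cc f n t) * phi t / INR (Xc f s t)) =
  sumR (seq 0 n) (fun i => phi i * (INR (Xc f s i) / INR (Xc f s i))).
Proof.
  intros Hphi.
  transitivity (sumR (seq 0 n) (fun i => sumR s (fun t => phi i / INR (Xc f s i) * ind (f t = f i)))).
  2:{ apply sumR_ext; intros i _. rewrite <- sumR_scal, <- Xc_sum. unfold Rdiv; ring. }
  rewrite sumR_swap. apply sumR_ext; intros t _.
  transitivity (sumR (seq 0 n) (fun i => phi t / INR (Xc f s t) * ind (f i = f t))).
  - rewrite <- sumR_scal. unfold cc. rewrite Xc_sum. unfold Rdiv; ring.
  - apply sumR_ext; intros i _.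
    destruct (excluded_middle_informative (f i = f t)) as [H|H].
    + rewrite (Hphi i t H), (Xc_inv f s i t H), ind_sym; auto.
    + rewrite ind_false, ind_sym, ind_false; auto. ring.
Qed.

Lemma cnt_map {d} (f : nat -> Fn d) s i :
  length (filter (fun h => decide (h = f i)) (map f s)) = Xc f s i.
Proof. unfold Xc; induction s; simpl; auto. destruct (decide (f a = f i)); simpl; auto. Qed.

Definition cnt {d} (L : list (Fn d)) (g : Fn d) : nat :=
  length (filter (fun h => decide (h = g)) L).
Definition Dsum {d} (L : list (Fn d)) : R := sumR L (fun g => / INR (cnt L g)).
Definition wt {d} (n : nat) (L : list (Fn d)) (g : Fn d) : R :=
  if decide (Dsum L = INR n) then 1
  else IZR (up (INR n * INR (cnt L g) / INR (length L) - / 2)).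
Definition Fhat {d} (n : nat) (L : list (Fn d)) : Fn d :=
  fun w => / INR n * sumR L (fun g => wt n L g / INR (cnt L g) * g w).
Definition good_out {d} (Fh : Fn d) (eps : R) (w : Vec d) : Prop :=
  exists m, is_inf Fh m /\ Fh w - m <= eps.
Definition alg {d} (n : nat) (eps : R) : algorithm d :=
  fun L => epsilon (inhabits (fun _ : Fin.t d => 0)) (good_out (Fhat n L) eps).

Lemma inf_exists {d} (F : Fn d) eps : 0 < eps -> bounded_below F ->
  exists m w, is_inf F m /\ F w - m <= eps.
Proof.
  intros He [b Hb].
  set (E := fun y => exists w, y = - F w).
  assert (HE : bound E). { exists (- b). intros y [w ->]. specialize (Hb w). lra. }
  assert (HE' : exists y, E y). { exists (- F (fun _ => 0)). exists (fun _ => 0). auto. }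
  destruct (completeness E HE HE') as [M [HM1 HM2]].
  exists (- M).
  assert (Hinf : is_inf F (- M)).
  { split.
    - intros w. assert (E (- F w)) by (exists w; auto). specialize (HM1 _ H). lra.
    - intros c Hc. assert (is_upper_bound E (- c)).
      { intros y [w ->]. specialize (Hc w). lra. }
      specialize (HM2 _ H). lra. }
  destruct (classic (exists w, F w - - M <= eps)) as [[w Hw]|Hno].
  - exists w; auto.
  - exfalso. assert (is_upper_bound E (M - eps)).
    { intros y [w ->]. destruct (Rle_dec (- F w) (M - eps)); auto.
      exfalso; apply Hno; exists w; lra. }
    specialize (HM2 _ H). lra.
Qed.

Lemma alg_ok {d} n eps (f : nat -> Fn d) s : 0 < eps ->
  bounded_below (finite_sum n f) ->
  (forall w, Fhat n (map f s) w = finite_sum n f w) ->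
  ~ fails n f eps (alg n eps) s.
Proof.
  intros He Hb Heq Hf.
  assert (HF : Fhat n (map f s) = finite_sum n f) by (apply functional_extensionality; auto).
  destruct (inf_exists _ eps He Hb) as [m [w [Hm Hw]]].
  assert (Hg : good_out (Fhat n (map f s)) eps (alg n eps (map f s))).
  { unfold alg. apply epsilon_spec. exists w. exists m. rewrite HF. auto. }
  destruct Hg as [m' [Hm' Hw']]. rewrite HF in Hm', Hw'.
  specialize (Hf m' Hm'). lra.
Qed.

Lemma Fhat_map {d} n (f : nat -> Fn d) s w :
  Fhat n (map f s) w = / INR n * sumR s (fun t => wt n (map f s) (f t) / INR (Xc f s t) * f t w).
Proof. unfold Fhat. rewrite sumR_map. f_equal. apply sumR_ext; intros t _. unfold cnt. rewrite cnt_map; auto. Qed.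

Lemma Dsum_map {d} (f : nat -> Fn d) s :
  Dsum (map f s) = sumR s (fun t => / INR (Xc f s t)).
Proof. unfold Dsum. rewrite sumR_map. apply sumR_ext; intros t _. unfold cnt. rewrite cnt_map; auto. Qed.

Lemma Fhat_correct {d} n (f : nat -> Fn d) s w :
  (forall t, In t s -> wt n (map f s) (f t) = INR (cc f n t)) ->
  (forall i, (i < n)%nat -> Xc f s i <> 0%nat) ->
  Fhat n (map f s) w = finite_sum n f w.
Proof.
  intros Hwt HX. rewrite Fhat_map. unfold finite_sum. rewrite fold_finite_sum. f_equal.
  transitivity (sumR s (fun t => INR (cc f n t) * f t w / INR (Xc f s t))).
  { apply sumR_ext; intros t Ht. rewrite Hwt; auto. unfold Rdiv; ring. }
  rewrite (key f n s (fun i => f i w)). 2:{ intros i j H; rewrite H; auto. }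
  apply sumR_ext; intros i Hi. apply in_seq in Hi.
  assert (INR (Xc f s i) <> 0) by (apply not_0_INR; apply HX; lia).
  field; auto.
Qed.

Lemma caseA_ok {d} n eps (f : nat -> Fn d) k s : 0 < eps ->
  bounded_below (finite_sum n f) ->
  (forall i, (i < n)%nat -> cc f n i = 1%nat) -> In s (idx_seqs n k) ->
  (forall i, (i < n)%nat -> Xc f s i <> 0%nat) -> ~ fails n f eps (alg n eps) s.
Proof.
  intros He Hb Hc Hs HX. destruct (idx_seqs_in _ _ _ Hs) as [_ Hsn].
  apply alg_ok; auto. intros w. apply Fhat_correct; auto.
  intros t Ht. rewrite (Hc t (Hsn t Ht)). unfold wt. rewrite decide_true; auto.
  rewrite Dsum_map.
  transitivity (sumR s (fun t => INR (cc f n t) * 1 / INR (Xc f s t))).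
  { apply sumR_ext; intros u Hu. rewrite (Hc u (Hsn u Hu)). simpl; unfold Rdiv; ring. }
  rewrite (key f n s (fun _ => 1)); auto.
  transitivity (sumR (seq 0 n) (fun _ => 1)).
  - apply sumR_ext; intros i Hi. apply in_seq in Hi.
    assert (INR (Xc f s i) <> 0) by (apply not_0_INR; apply HX; lia). field; auto.
  - rewrite sumR_const, length_seq; ring.
Qed.

Definition goodi {d} (f : nat -> Fn d) n k s i : Prop :=
  INR (cc f n i) - / 2 <= INR n * INR (Xc f s i) / INR k < INR (cc f n i) + / 2.

Lemma inv_cc_sum {d} (f : nat -> Fn d) n j : (j < n)%nat -> cc f n j <> 1%nat ->
  sumR (seq 0 n) (fun i => / INR (cc f n i)) <= INR n - / 2.
Proof.
  intros Hj Hcj.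
  apply Rle_trans with (sumR (seq 0 n) (fun i => 1 - / 2 * ind (i = j))).
  - apply sumR_le; intros i Hi. apply in_seq in Hi. pose proof (cc_pos f n i ltac:(lia)).
    destruct (Nat.eq_dec i j) as [->|Hne].
    + rewrite ind_true; auto. assert (2 <= INR (cc f n j)).
      { pose proof (cc_pos f n j Hj). assert (1 < cc f n j)%nat.
        { apply INR_lt in H0 || idtac. destruct (cc f n j) as [|[|m]]; try lia.
          simpl in H0; lra. }
        replace 2 with (INR 2) by (simpl; ring). apply le_INR; lia. }
      apply Rle_trans with (/ 2). apply Rinv_le_contravar; lra. lra.
    + rewrite ind_false; auto. rewrite Rmult_0_r, Rminus_0_r. rewrite <- Rinv_1.
      apply Rinv_le_contravar; lra.
  - unfold Rminus at 1. rewrite sumR_plus, sumR_const, length_seq.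
    rewrite <- (Rmult_1_r (INR n)) at 1.
    assert (1 <= sumR (seq 0 n) (fun i => ind (i = j))).
    { rewrite <- (ind_true (j = j) eq_refl). apply (sumR_ge_term _ (fun i => ind (i = j))).
      apply in_seq; lia. intros; apply ind_01. }
    assert (sumR (seq 0 n) (fun x => - (/ 2 * ind (x = j))) = - (/2 * sumR (seq 0 n) (fun i => ind (i = j)))).
    { rewrite sumR_scal. replace (-(sumR (seq 0 n) (fun x => / 2 * ind (x = j))))
        with (-1 * sumR (seq 0 n) (fun x => / 2 * ind (x = j))) by ring.
      rewrite sumR_scal. apply sumR_ext; intros; ring. }
    rewrite H0. lra.
Qed.

Lemma caseB_ok {d} n eps (f : nat -> Fn d) k s : 0 < eps ->
  bounded_below (finite_sum n f) -> (0 < k)%nat ->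
  (exists j, (j < n)%nat /\ cc f n j <> 1%nat) -> In s (idx_seqs n k) ->
  (forall i, (i < n)%nat -> goodi f n k s i) -> ~ fails n f eps (alg n eps) s.
Proof.
  intros He Hb Hk [j [Hj Hcj]] Hs Hg. destruct (idx_seqs_in _ _ _ Hs) as [Hlen Hsn].
  assert (Hk' : 0 < INR k) by (apply lt_0_INR; lia).
  assert (HX : forall i, (i < n)%nat -> Xc f s i <> 0%nat).
  { intros i Hi H0. destruct (Hg i Hi) as [H1 _]. rewrite H0 in H1. simpl in H1.
    pose proof (cc_pos f n i Hi). unfold Rdiv in H1. rewrite Rmult_0_r, Rmult_0_l in H1. lra. }
  apply alg_ok; auto. intros w. apply Fhat_correct; auto.
  intros t Ht. pose proof (Hsn t Ht) as Htn.
  assert (HD : Dsum (map f s) <> INR n).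
  { rewrite Dsum_map.
    assert (sumR s (fun t => / INR (Xc f s t)) = sumR (seq 0 n) (fun i => / INR (cc f n i))).
    { transitivity (sumR s (fun t => INR (cc f n t) * / INR (cc f n t) / INR (Xc f s t))).
      { apply sumR_ext; intros u Hu. pose proof (cc_pos f n u (Hsn u Hu)). field.
        split. apply not_0_INR. intro H0. rewrite H0 in H. simpl in H; lra.
        apply not_0_INR, HX, Hsn, Hu. }
      rewrite (key f n s (fun i => / INR (cc f n i))).
      2:{ intros a b Hab. unfold cc. rewrite (Xc_inv f _ a b Hab); auto. }
      apply sumR_ext; intros i Hi. apply in_seq in Hi.
      assert (INR (Xc f s i) <> 0) by (apply not_0_INR; apply HX; lia). field; auto.
      split; auto. pose proof (cc_pos f n i ltac:(lia)). lra. }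
    rewrite H. pose proof (inv_cc_sum f n j Hj Hcj). lra. }
  unfold wt. rewrite decide_false; auto. rewrite length_map, Hlen.
  rewrite (INR_IZR_INZ (cc f n t)). f_equal. symmetry. apply tech_up.
  - rewrite <- INR_IZR_INZ. unfold cnt. rewrite cnt_map. destruct (Hg t Htn). lra.
  - rewrite <- INR_IZR_INZ. unfold cnt. rewrite cnt_map. destruct (Hg t Htn). lra.
Qed.

Lemma pow0_ind m : 0 ^ m = ind (m = 0%nat).
Proof. destruct m; simpl. rewrite ind_true; auto. rewrite ind_false; [ring|lia]. Qed.

Lemma ind_ex_le (P : Prop) (l : list nat) (Q : nat -> Prop) :
  (P -> exists i, In i l /\ Q i) -> ind P <= sumR l (fun i => ind (Q i)).
Proof.
  intros H. destruct (excluded_middle_informative P) as [HP|HP].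
  - destruct (H HP) as [i [Hi HQ]]. rewrite ind_true; auto. rewrite <- (ind_true _ HQ).
    apply (sumR_ge_term l (fun i => ind (Q i))); auto. intros; apply ind_01.
  - rewrite ind_false; auto. apply sumR_nonneg; intros; apply ind_01.
Qed.

Lemma countA {d} (f : nat -> Fn d) n k :
  (forall i, (i < n)%nat -> cc f n i = 1%nat) ->
  sumR (idx_seqs n k) (fun s => ind (exists i, (i < n)%nat /\ Xc f s i = 0%nat))
  <= INR n * (INR n - 1) ^ k.
Proof.
  intros Hc.
  apply Rle_trans with (sumR (idx_seqs n k) (fun s => sumR (seq 0 n) (fun i => ind (Xc f s i = 0%nat)))).
  { apply sumR_le; intros s _. apply ind_ex_le. intros [i [Hi H]]. exists i; split; auto. apply in_seq; lia. }
  rewrite sumR_swap. right.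
  transitivity (sumR (seq 0 n) (fun _ => (INR n - 1) ^ k)).
  2:{ rewrite sumR_const, length_seq; auto. }
  apply sumR_ext; intros i Hi. apply in_seq in Hi.
  transitivity (sumR (idx_seqs n k) (fun s => 0 ^ length (filter (fun j => decide (f j = f i)) s))).
  { apply sumR_ext; intros s _. rewrite pow0_ind. auto. }
  rewrite sum_idx_pow, sum_if_count, length_seq.
  change (length (filter (fun j => decide (f j = f i)) (seq 0 n))) with (cc f n i).
  rewrite (Hc i ltac:(lia)). simpl INR. f_equal; ring.
Qed.

Lemma filter_negb_len {A} (l : list A) (b : A -> bool) :
  (length (filter (fun x => negb (b x)) l) + length (filter b l) = length l)%nat.
Proof. induction l; simpl; auto. destruct (b a); simpl; lia. Qed.

Lemma bad_bound {d} (f : nat -> Fn d) n k i : (0 < n)%nat -> (0 < k)%nat ->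
  sumR (idx_seqs n k) (fun s => ind (~ goodi f n k s i))
  <= 2 * (INR n ^ k * exp (- (2 * INR k * (/ (2 * INR n)) ^ 2))).
Proof.
  intros Hn Hk.
  assert (Hn' : 0 < INR n) by (apply lt_0_INR; lia).
  assert (Hk' : 0 < INR k) by (apply lt_0_INR; lia).
  set (b := fun j => decide (f j = f i)).
  set (nb := fun j => negb (b j)).
  set (t := / (2 * INR n)).
  assert (Ht : 0 < t) by (unfold t; apply Rinv_0_lt_compat; lra).
  pose proof (tail_up n k b t Hn Ht) as T1.
  pose proof (tail_up n k nb t Hn Ht) as T2.
  apply Rle_trans with (sumR (idx_seqs n k) (fun s =>
     ind (INR k * (INR (length (filter b (seq 0 n))) / INR n + t) <= INR (length (filter b s))) +
     ind (INR k * (INR (length (filter nb (seq 0 n))) / INR n + t) <= INR (length (filter nb s))))).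
  2:{ rewrite sumR_plus. lra. }
  apply sumR_le; intros s Hs. destruct (idx_seqs_in _ _ _ Hs) as [Hlen _].
  pose proof (ind_01 (INR k * (INR (length (filter b (seq 0 n))) / INR n + t) <= INR (length (filter b s)))).
  pose proof (ind_01 (INR k * (INR (length (filter nb (seq 0 n))) / INR n + t) <= INR (length (filter nb s)))).
  destruct (excluded_middle_informative (goodi f n k s i)) as [G|G].
  { rewrite ind_false by tauto. lra. }
  rewrite ind_true by auto.
  unfold goodi in G. fold (cc f n i) in *.
  change (length (filter b (seq 0 n))) with (cc f n i).
  change (length (filter b s)) with (Xc f s i).
  pose proof (filter_negb_len s b) as L1. pose proof (filter_negb_len (seq 0 n) b) as L2.
  fold nb in L1, L2. rewrite length_seq in L2. rewrite Hlen in L1.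
  change (length (filter b (seq 0 n))) with (cc f n i) in L2.
  change (length (filter b s)) with (Xc f s i) in L1.
  set (c := INR (cc f n i)) in *. set (X := INR (Xc f s i)) in *.
  assert (E1 : INR (length (filter nb s)) = INR k - X).
  { assert (INR k = INR (length (filter nb s)) + X) by (unfold X; rewrite <- plus_INR, L1; auto). lra. }
  assert (E2 : INR (length (filter nb (seq 0 n))) = INR n - c).
  { assert (INR n = INR (length (filter nb (seq 0 n))) + c) by (unfold c; rewrite <- plus_INR, L2; auto). lra. }
  rewrite E1, E2.
  set (y := INR n * X / INR k) in *.
  assert (HX : X = y * INR k / INR n) by (unfold y; field; lra).
  apply Classical_Prop.not_and_or in G. destruct G as [G|G].
  -
    pose proof (ind_01 (INR k * (c / INR n + t) <= X)).
    rewrite (ind_true (INR k * ((INR n - c) / INR n + t) <= INR k - X)). lra.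
    rewrite HX. unfold t.
    assert (y <= c - / 2) by lra.
    apply Rle_trans with (INR k - (c - / 2) * INR k / INR n).
    + right. field. lra.
    + unfold Rdiv. assert ((c - /2) * INR k * / INR n >= y * INR k * / INR n).
      { apply Rle_ge. apply Rmult_le_compat_r. left; apply Rinv_0_lt_compat; lra.
        apply Rmult_le_compat_r; lra. }
      lra.
  - pose proof (ind_01 (INR k * ((INR n - c) / INR n + t) <= INR k - X)).
    rewrite (ind_true (INR k * (c / INR n + t) <= X)). lra.
    rewrite HX. unfold t.
    assert (c + / 2 <= y) by lra.
    apply Rle_trans with ((c + / 2) * INR k / INR n).
    + right. field. lra.
    + unfold Rdiv. apply Rmult_le_compat_r. left; apply Rinv_0_lt_compat; lra.
      apply Rmult_le_compat_r; lra.
Qed.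

Lemma goodi_inv {d} (f : nat -> Fn d) n k s i j : f i = f j -> (goodi f n k s i <-> goodi f n k s j).
Proof. intros H. unfold goodi, cc. rewrite (Xc_inv f s i j H), (Xc_inv f (seq 0 n) i j H). tauto. Qed.

Lemma countB {d} (f : nat -> Fn d) n k j : (0 < n)%nat -> (0 < k)%nat -> (j < n)%nat -> cc f n j <> 1%nat ->
  sumR (idx_seqs n k) (fun s => ind (exists i, (i < n)%nat /\ ~ goodi f n k s i))
  <= (INR n - / 2) * (2 * (INR n ^ k * exp (- (2 * INR k * (/ (2 * INR n)) ^ 2)))).
Proof.
  intros Hn Hk Hj Hcj.
  set (E := 2 * (INR n ^ k * exp (- (2 * INR k * (/ (2 * INR n)) ^ 2)))).
  apply Rle_trans with (sumR (idx_seqs n k) (fun s => sumR (seq 0 n) (fun i => / INR (cc f n i) * ind (~ goodi f n k s i)))).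
  { apply sumR_le; intros s _.
    destruct (excluded_middle_informative (exists i, (i < n)%nat /\ ~ goodi f n k s i)) as [[j0 [Hj0 Hb]]|HN].
    - rewrite ind_true by eauto.
      pose proof (cc_pos f n j0 Hj0).
      apply Rle_trans with (sumR (seq 0 n) (fun i => / INR (cc f n j0) * ind (f i = f j0))).
      + rewrite <- sumR_scal.
        replace (sumR (seq 0 n) (fun i => ind (f i = f j0))) with (INR (cc f n j0)) by (unfold cc; apply Xc_sum).
        right; field. lra.
      + apply sumR_le; intros i Hi.
        destruct (excluded_middle_informative (f i = f j0)) as [He|He].
        * unfold cc. rewrite (Xc_inv f _ i j0 He). fold (cc f n j0). rewrite !ind_true; auto. lra.
          intro G. apply Hb. apply (goodi_inv f n k s i j0 He). auto.
        * rewrite ind_false by auto. rewrite Rmult_0_r. apply Rmult_le_pos. 2: apply ind_01.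
          apply in_seq in Hi. pose proof (cc_pos f n i ltac:(lia)). left; apply Rinv_0_lt_compat; lra.
    - rewrite ind_false by auto. apply sumR_nonneg; intros i Hi. apply Rmult_le_pos. 2: apply ind_01.
      apply in_seq in Hi. pose proof (cc_pos f n i ltac:(lia)). left; apply Rinv_0_lt_compat; lra. }
  rewrite sumR_swap.
  apply Rle_trans with (sumR (seq 0 n) (fun i => / INR (cc f n i) * E)).
  { apply sumR_le; intros i Hi. rewrite <- sumR_scal. apply Rmult_le_compat_l.
    apply in_seq in Hi. pose proof (cc_pos f n i ltac:(lia)). left; apply Rinv_0_lt_compat; lra.
    apply bad_bound; auto. }
  replace (sumR (seq 0 n) (fun i => / INR (cc f n i) * E)) with (E * sumR (seq 0 n) (fun i => / INR (cc f n i))).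
  2:{ rewrite sumR_scal. apply sumR_ext; intros; ring. }
  rewrite Rmult_comm. apply Rmult_le_compat_r.
  - unfold E. apply Rmult_le_pos. lra. apply Rmult_le_pos. apply pow_le, pos_INR. left; apply exp_pos.
  - apply (inv_cc_sum f n j Hj Hcj).
Qed.
Lemma numeric (N K delta : R) : 1 <= N -> 0 < delta < 1 ->
  2 * N ^ 2 * ln (2 * N / delta) - 1 < K ->
  N * exp (- (K / N)) < delta /\ (2 * N - 1) * exp (- (2 * K * (/ (2 * N)) ^ 2)) < delta.
Proof.
  intros HN Hd HK.
  set (L := ln (2 * N / delta)) in *.
  assert (H2 : 2 < 2 * N / delta).
  { apply (Rmult_lt_reg_r delta); [lra|]. unfold Rdiv. rewrite Rmult_assoc, Rinv_l; nra. }
  assert (HL : 0 < L). { unfold L. rewrite <- ln_1. apply ln_increasing; lra. }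
  assert (HeL : exp (- L) = delta / (2 * N)).
  { rewrite exp_Ropp. unfold L. rewrite exp_ln by lra. field. lra. }
  split.
  - assert (K / N > 2 * L - 1).
    { apply Rlt_gt. apply (Rmult_lt_reg_r N); [lra|]. unfold Rdiv. rewrite Rmult_assoc, Rinv_l by lra.
      assert (N * N * L >= N * L) by (apply Rle_ge; apply Rmult_le_compat_r; nra). simpl in HK. nra. }
    assert (exp (- (K / N)) < exp 1 * exp (- L) * exp (- L)).
    { rewrite <- !exp_plus. apply exp_increasing. lra. }
    rewrite HeL in H0. pose proof exp_le_3.
    assert (exp 1 * (delta / (2 * N)) * (delta / (2 * N)) <= 3 * (delta / (2 * N)) * (delta / (2 * N))).
    { apply Rmult_le_compat_r. apply Rlt_le, Rdiv_lt_0_compat; lra.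
      apply Rmult_le_compat_r. apply Rlt_le, Rdiv_lt_0_compat; lra. lra. }
    apply Rlt_le_trans with (N * (3 * (delta / (2 * N)) * (delta / (2 * N)))).
    + apply Rmult_lt_compat_l; lra.
    + replace (N * (3 * (delta / (2 * N)) * (delta / (2 * N)))) with (delta * (3 * delta / (4 * N))) by (field; lra).
      assert (3 * delta / (4 * N) <= 1).
      { apply (Rmult_le_reg_r (4 * N)); [lra|]. unfold Rdiv. rewrite Rmult_assoc, Rinv_l by lra. lra. }
      nra.
  - set (x := / (2 * N ^ 2)).
    assert (Hx : 0 < x <= / 2).
    { unfold x. split. apply Rinv_0_lt_compat; nra. apply Rinv_le_contravar; nra. }
    assert (E1 : 2 * K * (/ (2 * N)) ^ 2 = K * x) by (unfold x; field; lra).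
    rewrite E1.
    assert (K * x > L - x).
    { apply Rlt_gt. apply (Rmult_lt_reg_r (2 * N ^ 2)); [nra|].
      unfold x. rewrite Rmult_minus_distr_r, !Rmult_assoc, Rinv_l by nra. lra. }
    assert (exp (- (K * x)) < exp (- L) * exp x) by (rewrite <- exp_plus; apply exp_increasing; lra).
    rewrite HeL in H0.
    assert (Hex : exp x * (1 - x) < 1).
    { pose proof (exp_ineq1 (- x) ltac:(lra)).
      assert (exp x * exp (- x) = 1) by (rewrite <- exp_plus; replace (x + - x) with 0 by ring; apply exp_0).
      pose proof (exp_pos x). nra. }
    assert (HN2 : (2 * N - 1) <= 2 * N * (1 - x)).
    { unfold x. field_simplify; [|nra]. apply (Rmult_le_reg_r N); [lra|].
      unfold Rdiv. rewrite Rmult_assoc, Rinv_l by lra. nra. }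
    apply Rlt_le_trans with ((2 * N - 1) * (delta / (2 * N) * exp x)).
    + apply Rmult_lt_compat_l; lra.
    + assert ((2 * N - 1) * exp x <= 2 * N).
      { apply Rle_trans with (2 * N * (1 - x) * exp x).
        apply Rmult_le_compat_r. left; apply exp_pos. lra.
        pose proof (exp_pos x). nra. }
      replace ((2 * N - 1) * (delta / (2 * N) * exp x)) with (((2 * N - 1) * exp x) * (delta / (2 * N))) by ring.
      apply Rle_trans with (2 * N * (delta / (2 * N))).
      apply Rmult_le_compat_r. apply Rlt_le, Rdiv_lt_0_compat; lra. auto.
      right; field; lra.
Qed.

Lemma ind_mono (P Q : Prop) : (P -> Q) -> ind P <= ind Q.
Proof. intros H. destruct (excluded_middle_informative P) as [HP|HP].
  rewrite !ind_true; auto; lra. rewrite ind_false; auto. apply ind_01. Qed.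

Theorem theorem2 (d n : nat) (eps delta : R) :
  (0 < n)%nat -> 0 < eps -> 0 < delta < 1 ->
  exists k : nat,
    INR k <= 2 * INR n ^ 2 * ln (2 * INR n / delta) /\
    achieves d n k eps delta.
Proof.
  intros Hn He Hd.
  assert (HN : 1 <= INR n) by (replace 1 with (INR 1) by reflexivity; apply le_INR; lia).
  set (L := ln (2 * INR n / delta)).
  assert (H2 : 2 <= 2 * INR n / delta).
  { apply (Rmult_le_reg_r delta); [lra|]. unfold Rdiv. rewrite Rmult_assoc, Rinv_l; nra. }
  assert (HL : / 2 < L).
  { apply Rlt_le_trans with (ln 2). apply ln_lt_2.
    destruct (Req_dec 2 (2 * INR n / delta)) as [E|E]. unfold L; rewrite <- E; lra.
    left. apply ln_increasing; lra. }
  set (B := 2 * INR n ^ 2 * L).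
  assert (HB : 1 < B). { unfold B. simpl. assert (1 <= INR n * INR n) by nra. assert (1 * L <= INR n * INR n * L) by (apply Rmult_le_compat_r; lra). nra. }
  destruct (archimed B) as [U1 U2].
  assert (Hup : (1 <= up B)%Z). { apply le_IZR. simpl. lra. }
  set (k := Z.to_nat (up B - 1)).
  assert (Hk : INR k = IZR (up B) - 1).
  { unfold k. rewrite INR_IZR_INZ, Z2Nat.id by lia. rewrite minus_IZR. auto. }
  assert (Hk0 : (0 < k)%nat).
  { apply INR_lt. simpl. lra. }
  exists k. split. { fold L. fold B. lra. }
  set (E := exp (- (2 * INR k * (/ (2 * INR n)) ^ 2))).
  set (eta := Rmax (INR n * exp (- (INR k / INR n))) ((2 * INR n - 1) * E)).
  assert (Hnum := numeric (INR n) (INR k) delta HN Hd ltac:(fold L; fold B; lra)).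
  exists (alg n eps), eta. split.
  { unfold eta, E. apply Rmax_lub_lt; tauto. }
  intros f Hb. unfold prob_idx. rewrite (length_filter_sumR _ (fails n f eps (alg n eps))).
  rewrite pow_INR.
  assert (Hnk : 0 < INR n ^ k) by (apply pow_lt; lra).
  destruct (classic (forall i, (i < n)%nat -> cc f n i = 1%nat)) as [HA|HA].
  - apply Rle_trans with (INR n * exp (- (INR k / INR n))). 2: apply Rmax_l.
    apply Rle_trans with (sumR (idx_seqs n k) (fun s => ind (exists i, (i < n)%nat /\ Xc f s i = 0%nat)) / INR n ^ k).
    { unfold Rdiv. apply Rmult_le_compat_r. left; apply Rinv_0_lt_compat; auto.
      apply sumR_le; intros s Hs. apply ind_mono. intros Hf.
      apply Classical_Prop.NNPP. intro HN'. apply (caseA_ok n eps f k s He Hb HA Hs); auto.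
      intros i Hi H0. apply HN'. eauto. }
    apply Rle_trans with (INR n * (INR n - 1) ^ k / INR n ^ k).
    { unfold Rdiv. apply Rmult_le_compat_r. left; apply Rinv_0_lt_compat; auto. apply countA; auto. }
    replace (INR n * (INR n - 1) ^ k / INR n ^ k) with (INR n * ((INR n - 1) / INR n) ^ k).
    2:{ unfold Rdiv. rewrite Rpow_mult_distr, pow_inv. field. apply pow_nonzero. lra. }
    apply Rmult_le_compat_l; [lra|].
    replace (- (INR k / INR n)) with (INR k * (- / INR n)) by (field; lra).
    rewrite exp_INR_mult. apply pow_incr. split.
    + apply Rmult_le_pos; [lra|]. left; apply Rinv_0_lt_compat; lra.
    + assert (1 + - / INR n <= exp (- / INR n)).
      { left. apply exp_ineq1. apply Ropp_neq_0_compat. apply Rinv_neq_0_compat. lra. }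
      replace ((INR n - 1) / INR n) with (1 + - / INR n) by (field; lra). auto.
  - assert (Hj : exists j, (j < n)%nat /\ cc f n j <> 1%nat).
    { apply Classical_Prop.NNPP. intro H0. apply HA. intros i Hi.
      apply Classical_Prop.NNPP. intro H1. apply H0. eauto. }
    destruct Hj as [j [Hj Hcj]].
    apply Rle_trans with ((2 * INR n - 1) * E). 2: apply Rmax_r.
    apply Rle_trans with (sumR (idx_seqs n k) (fun s => ind (exists i, (i < n)%nat /\ ~ goodi f n k s i)) / INR n ^ k).
    { unfold Rdiv. apply Rmult_le_compat_r. left; apply Rinv_0_lt_compat; auto.
      apply sumR_le; intros s Hs. apply ind_mono. intros Hf.
      apply Classical_Prop.NNPP. intro HN'. apply (caseB_ok n eps f k s He Hb Hk0 (ex_intro _ j (conj Hj Hcj)) Hs); auto.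
      intros i Hi. apply Classical_Prop.NNPP. intro H0. apply HN'. eauto. }
    apply Rle_trans with ((INR n - / 2) * (2 * (INR n ^ k * E)) / INR n ^ k).
    { unfold Rdiv. apply Rmult_le_compat_r. left; apply Rinv_0_lt_compat; auto. apply countB with j; auto. }
    right. field. lra.
Qed.
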